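(* Let $G=K_S(r,s)$ be a complete split graph. Then the sparing number of $G$ equals the sparing number of a maximal clique in $G$.
   Context: A split graph is a graph whose vertex set can be partitioned into a clique $K_r$ and an independent set $S$. It is a complete split graph, denoted $K_S(r,s)$ with $r=|V(K_r)|$ and $s=|S|$, if every vertex of $S$ is adjacent to every vertex of $K_r$. Let $\mathbb{N}_0$ be the set of non-negative integers; for $A,B\subseteq\mathbb{N}_0$, $A+B=\{a+b:a\in A,b\in B\}$. An integer additive set-indexer (IASI) of a graph $G$ is an injective map $f:V(G)\to\mathcal{P}(\mathbb{N}_0)$ such that $f^+:E(G)\to\mathcal{P}(\mathbb{N}_0)$, $f^+(uv)=f(u)+f(v)$, is injective. A weak IASI is an IASI with $|f^+(uv)|=\max(|f(u)|,|f(v)|)$ for every edge $uv$. An edge $e$ is mono-indexed if $|f^+(e)|=1$. The sparing number $\varphi(G)$ is the minimum number of mono-indexed edges over all weak IASIs of $G$. *)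

(* Defs.v *)
From mathcomp Require Import all_boot all_order.
From mathcomp Require Import finmap.
Set Implicit Arguments. Unset Strict Implicit. Unset Printing Implicit Defensive.
Local Open Scope fset_scope.

(* A simple graph on a finite vertex type T is an adjacency relation [e];
   we only use symmetric irreflexive relations. *)

Definition sumset (A B : {fset nat}) : {fset nat} :=
  [fset (a + b)%N | a in A, b in B].

(* An integer additive set-indexer of the graph (T, e): an injective map
   f from vertices to nonempty finite subsets of N_0 whose induced edge map
   f^+(uv) = f(u) + f(v) is injective on (unordered) edges. *)
Definition is_IASI (T : finType) (e : rel T) (f : T -> {fset nat}) : Prop :=
  [/\ forall v, f v != fset0,
      injective f &
      forall u v u' v', e u v -> e u' v' ->
        sumset (f u) (f v) = sumset (f u') (f v') ->
        (u = u' /\ v = v') \/ (u = v' /\ v = u')].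

Definition is_weak_IASI (T : finType) (e : rel T) (f : T -> {fset nat}) : Prop :=
  is_IASI e f /\
  forall u v, e u v -> #|` sumset (f u) (f v)| = maxn #|` f u| #|` f v|.

Definition mono_edges (T : finType) (e : rel T) (f : T -> {fset nat}) : nat :=
  #|[set E : {set T} | [exists u, exists v,
       [&& E == [set u; v], e u v & #|` sumset (f u) (f v)| == 1%N]]]|.

Definition is_sparing_number (T : finType) (e : rel T) (k : nat) : Prop :=
  (exists f, is_weak_IASI e f /\ mono_edges e f = k) /\
  (forall f, is_weak_IASI e f -> k <= mono_edges e f).

(* The complete split graph with clique part K and independent part ~: K:
   x ~ y iff x <> y and at least one of them lies in K.
   It is K_S(r, s) with r = #|K| and s = #|~: K|. *)
Definition csplit (T : finType) (K : {set T}) : rel T :=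
  fun x y => (x != y) && ((x \in K) || (y \in K)).

Definition is_clique (T : finType) (e : rel T) (Q : {set T}) : bool :=
  [forall x in Q, forall y in Q, (x != y) ==> e x y].

Definition is_maximal_clique (T : finType) (e : rel T) (Q : {set T}) : Prop :=
  is_clique e Q /\ forall Q' : {set T}, is_clique e Q' -> Q \subset Q' -> Q' = Q.

Definition induced (T : finType) (e : rel T) (Q : {set T}) :
  rel {x : T | x \in Q} := fun x y => e (val x) (val y).
Arguments induced [T] e Q _ _.

(* Main.v *)
Require Import Defs.
From mathcomp Require Import all_boot all_order.
From mathcomp Require Import finmap zify.


Lemma mem_sumset (A B : {fset nat}) x :
  reflect (exists a b, [/\ a \in A, b \in B & x = a + b]) (x \in sumset A B).
Proof.
apply: (iffP (imfset2P _ _ _ _ _)).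
  by move=> [a aA [b bB ->]]; exists a, b.
by move=> [a [b [aA bB ->]]]; exists a => //; exists b.
Qed.

Lemma sumset_in (A B : {fset nat}) a b : a \in A -> b \in B -> a + b \in sumset A B.
Proof. by move=> aA bB; apply/mem_sumset; exists a, b. Qed.

Lemma sumsetC (A B : {fset nat}) : sumset A B = sumset B A.
Proof.
apply/fsetP => x; apply/mem_sumset/mem_sumset => -[a [b [aA bB ->]]];
  by exists b, a; rewrite addnC.
Qed.

Lemma card_trans (A : {fset nat}) (b : nat) : #|` [fset (a + b)%N | a in A]%fset| = #|` A|.
Proof. by rewrite card_in_imfset //= => x y _ _ /addIn. Qed.

Lemma sumset_geA (A B : {fset nat}) b : b \in B -> #|` A| <= #|` sumset A B|.
Proof.
move=> bB; rewrite -(card_trans A b); apply: fsubset_leq_card.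
apply/fsubsetP => x /imfsetP [a /= aA ->]; exact: sumset_in.
Qed.

Lemma sumset_gt (A B : {fset nat}) a0 a1 :
  a0 \in A -> a1 \in A -> a0 < a1 -> B != fset0 -> #|` B| < #|` sumset A B|.
Proof.
move=> a0A a1A lt01 /fset0Pn hB.
have [bm bmB bmin] := ex_minnP hB.
rewrite sumsetC -(card_trans B a1).
have nin : (a0 + bm)%N \notin [fset (b + a1)%N | b in B]%fset.
  apply/negP => /imfsetP [b /= bB] /eqP; have := bmin _ bB. 
  move=> h1 h2; move/eqP: h2 => h2. lia.
apply: (@leq_trans #|` ((a0 + bm)%N |` [fset (b + a1)%N | b in B])%fset|).
  by rewrite cardfsU1 nin.
apply: fsubset_leq_card; apply/fsubsetP => x; rewrite in_fset1U => /orP [/eqP ->|].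
  by rewrite sumsetC; apply: sumset_in.
move=> /imfsetP [b /= bB ->]; rewrite addnC sumsetC; exact: sumset_in.
Qed.

Lemma sumset_single (A : {fset nat}) b : #|` sumset A [fset b]%fset| = #|` A|.
Proof.
apply/eqP; rewrite eqn_leq (@sumset_geA A _ _ (fset11 b)) andbT.
rewrite -(card_trans A b); apply: fsubset_leq_card; apply/fsubsetP => x.
move/mem_sumset => [a [c [aA /fset1P -> ->]]]; by apply/imfsetP; exists a.
Qed.
Lemma pow2_pair_lt i j k l : i < j -> k < l -> 2^i + 2^j = 2^k + 2^l -> i = k /\ j = l.
Proof.
move=> ij kl E.
have hij : 2^i < 2^j by rewrite ltn_exp2l.
have hkl : 2^k < 2^l by rewrite ltn_exp2l.
have jl : j = l.
  case: (ltngtP j l) => // H.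
  - have : 2^j.+1 <= 2^l by rewrite leq_exp2l.
    rewrite expnS; lia.
  - have : 2^l.+1 <= 2^j by rewrite leq_exp2l.
    rewrite expnS; lia.
subst l; split => //; apply/eqP; rewrite -(eqn_exp2l _ _ (isT : 1 < 2)); apply/eqP; lia.
Qed.

Arguments pow2_pair_lt {i j k l}.
Lemma pow2_pair i j k l : i != j -> k != l -> 2^i + 2^j = 2^k + 2^l ->
  (i = k /\ j = l) \/ (i = l /\ j = k).
Proof.
move=> ij kl E.
case: (ltngtP i j) ij => // H _; case: (ltngtP k l) kl => // H' _.
- by left; apply: pow2_pair_lt.
- by right; have [] := pow2_pair_lt H H' (etrans E (addnC _ _)).
- by right; have [] := pow2_pair_lt H H' (etrans (addnC _ _) E).
- by left; have [] := pow2_pair_lt H H' (etrans (addnC _ _) (etrans E (addnC _ _))).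
Qed.

Lemma two_elems (A : {fset nat}) : 1 < #|` A| -> exists a0 a1, [/\ a0 \in A, a1 \in A & a0 < a1].
Proof.
move=> h.
have /fset0Pn [a aA] : A != fset0 by rewrite -cardfs_gt0; lia.
have : (A `\ a)%fset != fset0.
  by rewrite -cardfs_gt0; move: h; rewrite (cardfsD1 a A) aA add1n ltnS.
move=> /fset0Pn [b]; rewrite in_fsetD1 => /andP [ba bA].
case: (ltngtP a b) ba => [H|H|/eqP]; rewrite ?eqxx //.
- by move=> _; exists a, b.
- by move=> _; exists b, a.
Qed.

Lemma weak_edge (T : finType) (e : rel T) f u v :
  is_weak_IASI e f -> e u v -> #|` f u| = 1 \/ #|` f v| = 1.
Proof.
move=> [[ne _ _] W] euv.
have hu := ne u; have hv := ne v.
rewrite -cardfs_gt0 in hu; rewrite -cardfs_gt0 in hv.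
case: (leqP #|` f u| 1) => Hu; first by left; lia.
case: (leqP #|` f v| 1) => Hv; first by right; lia.
exfalso.
have [a0 [a1 [? ? ?]]] := @two_elems _ Hu.
have [b0 [b1 [? ? ?]]] := @two_elems _ Hv.
have h1 : #|` f v| < #|` sumset (f u) (f v)| by apply: (@sumset_gt _ _ a0 a1); rewrite // -cardfs_gt0.
have h2 : #|` f u| < #|` sumset (f u) (f v)|.
  by rewrite sumsetC; apply: (@sumset_gt _ _ b0 b1); rewrite // -cardfs_gt0.
have := W _ _ euv; lia.
Qed.

Lemma mono_both (A B : {fset nat}) : A != fset0 -> B != fset0 ->
  #|` sumset A B| = 1 -> #|` A| = 1 /\ #|` B| = 1.
Proof.
move=> hA hB h.
have /fset0Pn [a aA] := hA; have /fset0Pn [b bB] := hB.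
have := @sumset_geA A _ _ bB; have := @sumset_geA B _ _ aA; rewrite sumsetC h.
move=> h1 h2; move: hA hB; rewrite -!cardfs_gt0 => hA hB; lia.
Qed.

Definition Sg {T : finType} (f : T -> {fset nat}) : {set T} := [set v | #|` f v| == 1].

Lemma lower_bound (T : finType) (e : rel T) f (C : {set T}) :
  is_weak_IASI e f ->
  (forall x y, x \in C -> y \in C -> x != y -> e x y) ->
  C \subset Sg f -> 'C(#|C|, 2) <= mono_edges e f.
Proof.
move=> W cl CS; rewrite -cards_draws /mono_edges; apply: subset_leq_card.
apply/subsetP => E; rewrite !inE => /andP [EC /cards2P [x [y [xy Exy]]]].
have xC : x \in C by apply: (subsetP EC); rewrite Exy !inE eqxx.
have yC : y \in C by apply: (subsetP EC); rewrite Exy !inE eqxx orbT.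
apply/existsP; exists x; apply/existsP; exists y; rewrite Exy eqxx cl //=.
have := subsetP CS _ xC; have := subsetP CS _ yC; rewrite !inE.
move=> /cardfs1P [b ->] /cardfs1P [a ->]; by rewrite sumset_single cardfs1.
Qed.

Lemma upper_bound (T : finType) (e : rel T) f :
  (forall x, ~~ e x x) -> is_weak_IASI e f ->
  mono_edges e f <= 'C(#|Sg f|, 2).
Proof.
move=> irr W; rewrite -cards_draws /mono_edges; apply: subset_leq_card.
apply/subsetP => E; rewrite !inE => /existsP [u /existsP [v /and3P [/eqP -> euv /eqP h]]].
have uv : u != v by apply/eqP => uv; move: euv; rewrite uv (negbTE (irr v)).
have [[ne _ _] _] := W.
have [hu hv] := @mono_both _ _ (ne u) (ne v) h.
rewrite cards2 uv eqxx andbT; apply/subsetP => x; rewrite !inE => /orP [] /eqP ->;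
  by rewrite ?hu ?hv.
Qed.

Lemma construct (T : finType) (e : rel T) (I : {set T}) :
  (forall x, ~~ e x x) -> (forall u v, e u v -> ~~ ((u \in I) && (v \in I))) ->
  exists f, is_weak_IASI e f /\ Sg f = ~: I.
Proof.
move=> irr indep.
pose p (v : T) := 2 ^ (enum_rank v : nat).
pose N := 2 ^ #|T|.
pose fv (v : T) := if v \in I then [fset p v; (p v + N)%N]%fset else [fset p v]%fset.
have pN v : p v < N by rewrite /p /N ltn_exp2l.
have N0 : 0 < N by rewrite /N expn_gt0.
have memf v x : x \in fv v -> x = p v \/ x = (p v + N)%N.
  rewrite /fv; case: (v \in I).
  - by rewrite in_fset2 => /orP [] /eqP ->; [left|right].
  - by rewrite in_fset1 => /eqP ->; left.
have inf v : p v \in fv v by rewrite /fv; case: (v \in I); rewrite ?in_fset2 ?in_fset1 eqxx.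
have cardf v : (#|` fv v| == 1) = (v \notin I).
  rewrite /fv; case: (v \in I) => /=; last by rewrite cardfs1.
  rewrite cardfs2; case: eqP => //; lia.
have pinj u v : p u = p v -> u = v.
  by move/(expnI (isT : 1 < 2))/val_inj/enum_rank_inj.
exists fv; split; last first.
  by apply/setP => v; rewrite !inE cardf.
split; last first.
  move=> u v euv.
  have := indep _ _ euv; rewrite negb_and => /orP [] hI.
  - have -> : fv u = [fset p u]%fset by rewrite /fv (negbTE hI).
    rewrite sumsetC sumset_single cardfs1.
    have : 0 < #|` fv v| by rewrite cardfs_gt0; apply/fset0Pn; exists (p v).
    lia.
  - have -> : fv v = [fset p v]%fset by rewrite /fv (negbTE hI).
    rewrite sumset_single cardfs1.
    have : 0 < #|` fv u| by rewrite cardfs_gt0; apply/fset0Pn; exists (p u).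
    lia.
split.
- by move=> v; apply/fset0Pn; exists (p v).
- move=> u v E; apply: pinj.
  have := inf u; rewrite E => /memf [] // h; have := pN u; lia.
- move=> u v u' v' euv eu'v' E.
  have lb a b x : x \in sumset (fv a) (fv b) -> p a + p b <= x.
    move/mem_sumset => [x1 [x2 [/memf h1 /memf h2 ->]]]; case: h1; case: h2; lia.
  have e1 : p u' + p v' <= p u + p v by apply: lb; rewrite -E; apply: sumset_in.
  have e2 : p u + p v <= p u' + p v' by apply: lb; rewrite E; apply: sumset_in.
  have Eq : p u + p v = p u' + p v' by lia.
  have ne a b : e a b -> nat_of_ord (enum_rank a) != nat_of_ord (enum_rank b).
    move=> eab; apply/eqP => /val_inj/enum_rank_inj ab; move: eab.
    by rewrite ab (negbTE (irr b)).
  have [[h1 h2]|[h1 h2]] := @pow2_pair _ _ _ _ (ne _ _ euv) (ne _ _ eu'v') Eq.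
  + left; split; apply: pinj; by rewrite /p ?h1 ?h2.
  + right; split; apply: pinj; by rewrite /p ?h1 ?h2.
Qed.

Arguments construct {T e I}.
Arguments weak_edge {T e f u v}.
Arguments lower_bound {T e f C}.
Arguments upper_bound {T e f}.

Definition cliqueP {T : finType} (e : rel T) (C : {set T}) :=
  forall x y, x \in C -> y \in C -> x != y -> e x y.

Lemma sparing_of (T : finType) (e : rel T) (t : nat) :
  (forall x, ~~ e x x) ->
  (exists I : {set T}, [/\ (forall u v, e u v -> ~~ ((u \in I) && (v \in I))),
                         cliqueP e (~: I) & #|~: I| = t]) ->
  (forall f, is_weak_IASI e f -> exists C, [/\ cliqueP e C, C \subset Sg f & t <= #|C|]) ->
  is_sparing_number e 'C(t, 2).
Proof.
move=> irr [I [ind cl ct]] low; split.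
  have [f [W Sf]] := construct irr ind.
  exists f; split => //; apply/eqP; rewrite eqn_leq.
  rewrite -ct -Sf upper_bound //=; apply: lower_bound => //; by rewrite Sf.
move=> f W; have [C [cC CS tC]] := low f W.
apply: leq_trans (lower_bound W cC CS); exact: leq_bin2l.
Qed.

Lemma complete_sparing (T : finType) (e : rel T) :
  (forall x, ~~ e x x) -> (forall x y, x != y -> e x y) ->
  is_sparing_number e 'C(#|T|.-1, 2).
Proof.
move=> irr comp; apply: sparing_of => //.
  case: (set_0Vmem [set: T]) => [T0|[k0 _]].
    exists set0; split => //; first by move=> u v; rewrite inE.
      by move=> x y _ _; apply: comp.
    by rewrite setC0 cardsT -cardsT T0 cards0.
  exists [set k0]; split.
  - move=> u v euv; apply/negP => /andP [/set1P hu /set1P hv].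
    by move: euv; rewrite hu hv (negbTE (irr k0)).
  - by move=> x y _ _; apply: comp.
  - by rewrite cardsC1.
move=> f W.
case: (boolP ([set: T] \subset Sg f)) => [hS|/subsetPn [k _ kS]].
  by exists [set: T]; split => //; [move=> x y _ _; apply: comp | rewrite cardsT leq_pred].
exists [set~ k]; split.
- by move=> x y _ _; apply: comp.
- apply/subsetP => v; rewrite !inE => vk.
  have [h|h] := weak_edge W (comp _ _ vk); first by rewrite h.
  by move: kS; rewrite inE h.
- by rewrite cardsC1.
Qed.

Lemma cliquePE (T : finType) (e : rel T) Q : is_clique e Q -> cliqueP e Q.
Proof.
move=> /forallP h x y xQ yQ xy.
by have /implyP/(_ xQ)/forallP/(_ y)/implyP/(_ yQ)/implyP/(_ xy) := h x.
Qed.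

Lemma cliqueEP (T : finType) (e : rel T) Q : cliqueP e Q -> is_clique e Q.
Proof.
move=> h; apply/forallP => x; apply/implyP => xQ; apply/forallP => y.
by apply/implyP => yQ; apply/implyP => xy; apply: h.
Qed.

Arguments cliquePE {T e Q}.
Arguments cliqueEP {T e Q}.

Theorem theorem2p6 (T : finType) (K : {set T}) (Q : {set T}) :
  is_maximal_clique (csplit K) Q ->
  exists k : nat,
    is_sparing_number (csplit K) k /\ is_sparing_number (induced (csplit K) Q) k.
Proof.
move=> [Qc Qmax].
have Qcl := cliquePE Qc.
have irr x : ~~ csplit K x x by rewrite /csplit eqxx.
have KQ : K \subset Q.
  apply/subsetP => k kK.
  have cl : cliqueP (csplit K) (k |: Q).
    move=> x y; rewrite !inE => /orP [/eqP ->|xQ] /orP [/eqP ->|yQ] xy.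
    - by rewrite eqxx in xy.
    - by rewrite /csplit xy kK.
    - by rewrite /csplit xy kK orbT.
    - exact: Qcl.
  by rewrite -(Qmax _ (cliqueEP cl) (subsetUr _ _)) setU11.
pose U : finType := {x : T | x \in Q}.
have cardU : #|U| = #|Q| by rewrite card_sig; apply: eq_card.
have Qside : is_sparing_number (induced (csplit K) Q) 'C(#|U|.-1, 2).
  apply: complete_sparing.
  - by move=> x; rewrite /induced irr.
  - move=> x y xy; rewrite /induced; apply: Qcl; rewrite ?(valP x) ?(valP y) //.
case: (boolP [exists x, x \notin K]) => [/existsP [x0 x0K]|noX].
  have [y yQ yK] : exists2 y, y \in Q & y \notin K.
    case: (boolP [exists y in Q, y \notin K]) => [/existsP [y /andP [? ?]]|/existsPn h].
      by exists y.
    have QK y : y \in Q -> y \in K by move=> yQ; have := h y; rewrite yQ /= negbK.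
    have cl : cliqueP (csplit K) (x0 |: Q).
      move=> x y; rewrite !inE => /orP [/eqP ->|xQ] /orP [/eqP ->|yQ] xy.
      - by rewrite eqxx in xy.
      - by rewrite /csplit xy (QK _ yQ) orbT.
      - by rewrite /csplit xy (QK _ xQ).
      - exact: Qcl.
    have := setU11 x0 Q; rewrite (Qmax _ (cliqueEP cl) (subsetUr _ _)) => /QK.
    by rewrite (negbTE x0K).
  have QE : Q = y |: K.
    apply/setP => z; rewrite !inE; apply/idP/idP.
    - move=> zQ; case: (boolP (z \in K)) => zK; rewrite ?orbT //.
      apply/orP; left; apply/eqP; apply: contraNeq zK => zy.
      have := Qcl _ _ zQ yQ zy; by rewrite /csplit (negbTE yK) orbF => /andP [].
    - by move=> /orP [/eqP ->|/(subsetP KQ)].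
  have cQ : #|Q| = #|K|.+1 by rewrite QE cardsU1 yK.
  exists 'C(#|K|, 2); split; last by have -> : #|K| = #|U|.-1 by rewrite cardU cQ.
  apply: sparing_of => //.
    exists (~: K); split.
    - move=> u v euv; apply/negP; rewrite !inE => /andP [/negbTE hu /negbTE hv].
      by move: euv; rewrite /csplit hu hv andbF.
    - by rewrite setCK => x z xK _ xz; rewrite /csplit xz xK.
    - by rewrite setCK.
  move=> f W.
  case: (boolP (K \subset Sg f)) => [hS|/subsetPn [k kK kS]].
    by exists K; split => //; move=> x z xK _ xz; rewrite /csplit xz xK.
  have inS v : v != k -> v \in Sg f.
    move=> vk; have ekv : csplit K k v by rewrite /csplit eq_sym vk kK.
    have [h|h] := weak_edge W ekv; last by rewrite inE h.
    by move: kS; rewrite inE h.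
  have x0k : x0 != k by apply: contraNneq x0K => ->.
  exists (x0 |: (K :\ k)); split.
  - move=> x z; rewrite !inE => /orP [/eqP ->|/andP [_ xK]] /orP [/eqP ->|/andP [_ zK]] xz.
    + by rewrite eqxx in xz.
    + by rewrite /csplit xz zK orbT.
    + by rewrite /csplit xz xK.
    + by rewrite /csplit xz xK.
  - apply/subsetP => v vC; apply: inS; move: vC; rewrite !inE => /orP [/eqP ->|/andP [vk _]] //.
  - rewrite cardsU1 !inE (negbTE x0K) andbF /= (cardsD1 k K) kK; lia.
have allK z : z \in K by have := (existsPn noX) z; rewrite negbK.
have QT : Q = [set: T] by apply/setP => z; rewrite inE (subsetP KQ).
exists 'C(#|T|.-1, 2); split; last by have -> : #|T| = #|U| by rewrite cardU QT cardsT.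
apply: complete_sparing => // x z xz; by rewrite /csplit xz allK.
Qed.
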